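(* Let $b\ge 2$ and $m\ge 0$ be integers. Consider the following nondeterministic procedure. Set $\mathcal U_1=[0,1)^2$. For $n=1,2,\ldots$: if $\mathcal U_n=\emptyset$, stop; otherwise choose an arbitrary box $X_n=\prod_{j=1}^2\left[\frac{u_j(n)}{b^m},\frac{u_j(n)+1}{b^m}\right)\subseteq \mathcal U_n$ with $u_j(n)\in\{0,1,\ldots,b^m-1\}$, and set $\mathcal U_{n+1}=\mathcal U_n\setminus\bigcup_{E\in\mathcal E_m(X_n)}E$. Then, regardless of the choices made, the procedure stops after at most $b^m$ boxes have been chosen.
   Context: An elementary $b$-adic interval in $[0,1)^s$ is a set $\prod_{j=1}^s\left[\frac{a_j}{b^{d_j}},\frac{a_j+1}{b^{d_j}}\right)$ with $d_j\in\mathbb N_0$ and $a_j\in\{0,1,\ldots,b^{d_j}-1\}$; its volume is $b^{-(d_1+\cdots+d_s)}$. For a box $X=\prod_{j=1}^s\left[\frac{u_j}{b^m},\frac{u_j+1}{b^m}\right)$, $\mathcal E_m(X)$ denotes the set of all elementary $b$-adic intervals of volume $b^{-m}$ that contain $X$ as a subset. *)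

(* Defs.v *)
From Stdlib Require Import Reals.
Open Scope R_scope.

Definition rset := R -> R -> Prop.

Definition rsubset (A B : rset) : Prop := forall x y, A x y -> B x y.

Definition dyadic_box (b d1 d2 a1 a2 : nat) : rset := fun x y =>
  INR a1 / INR b ^ d1 <= x < (INR a1 + 1) / INR b ^ d1 /\
  INR a2 / INR b ^ d2 <= y < (INR a2 + 1) / INR b ^ d2.

Definition elem_params (b d1 d2 a1 a2 : nat) : Prop :=
  (a1 < b ^ d1)%nat /\ (a2 < b ^ d2)%nat.

Definition gridbox (b m u1 u2 : nat) : rset := dyadic_box b m m u1 u2.

(* (d1,d2,a1,a2) describes an element of E_m(X) for X = gridbox b m u1 u2:
   an elementary b-adic interval of volume b^{-(d1+d2)} = b^{-m}, containing X. *)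
Definition in_Em (b m u1 u2 d1 d2 a1 a2 : nat) : Prop :=
  elem_params b d1 d2 a1 a2 /\ (d1 + d2)%nat = m /\
  rsubset (gridbox b m u1 u2) (dyadic_box b d1 d2 a1 a2).

Definition Em_union (b m u1 u2 : nat) : rset := fun x y =>
  exists d1 d2 a1 a2, in_Em b m u1 u2 d1 d2 a1 a2 /\ dyadic_box b d1 d2 a1 a2 x y.

Definition unit_square : rset := fun x y => 0 <= x < 1 /\ 0 <= y < 1.

(* Uset b m u k = U_{k+1} of the paper, where the boxes chosen are
   X_{n+1} = gridbox b m (fst (u n)) (snd (u n)) (0-based index n). *)
Fixpoint Uset (b m : nat) (u : nat -> nat * nat) (k : nat) : rset :=
  match k with
  | O => unit_square
  | S k' => fun x y => Uset b m u k' x y /\ ~ Em_union b m (fst (u k')) (snd (u k')) x y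
  end.

(* Main.v *)
Require Import Defs.
From Stdlib Require Import Reals Lra Lia List.
Open Scope R_scope.

Lemma Uset_not (b m : nat) (u : nat -> nat * nat) n x y :
  Uset b m u n x y -> forall k, (k < n)%nat -> ~ Em_union b m (fst (u k)) (snd (u k)) x y.
Proof.
  induction n as [|n IH]; simpl; intros H k Hk.
  - lia.
  - destruct H as [H1 H2].
    destruct (Nat.eq_dec k n) as [->|Hne]; [exact H2|].
    apply IH; [exact H1|lia].
Qed.

Lemma Bpos b m : (2 <= b)%nat -> 0 < INR b ^ m.
Proof. intros hb; apply pow_lt; apply lt_0_INR; lia. Qed.

Lemma col_box b m u1 u2 x y : (2 <= b)%nat -> (u2 < b ^ m)%nat ->
  gridbox b m u1 u2 x y -> dyadic_box b m 0 u1 0 x y.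
Proof.
  intros hb h2 [Hx [Hy1 Hy2]]; pose proof (Bpos b m hb) as B; split; [exact Hx|].
  assert (Hu : INR u2 + 1 <= INR b ^ m).
  { rewrite <- pow_INR, <- S_INR; apply le_INR; lia. }
  simpl; rewrite !Rdiv_1_r; split.
  - eapply Rle_trans; [|exact Hy1]. unfold Rdiv; apply Rmult_le_pos;
      [apply pos_INR|left; apply Rinv_0_lt_compat; lra].
  - eapply Rlt_le_trans; [exact Hy2|].
    unfold Rdiv; apply (Rmult_le_reg_r (INR b ^ m)); [exact B|].
    rewrite Rmult_assoc, Rinv_l; lra.
Qed.

Lemma col_in_Em b m u1 u2 : (2 <= b)%nat -> (u1 < b ^ m)%nat -> (u2 < b ^ m)%nat ->
  in_Em b m u1 u2 m 0 u1 0.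
Proof.
  intros hb h1 h2.
  split; [split; simpl; lia|split; [lia|]].
  intros x y; apply col_box; assumption.
Qed.

Lemma distinct b m (u : nat -> nat * nat) N (hb : (2 <= b)%nat)
  (hrun : forall n : nat, (n < N)%nat ->
     (fst (u n) < b ^ m)%nat /\ (snd (u n) < b ^ m)%nat /\
     rsubset (gridbox b m (fst (u n)) (snd (u n))) (Uset b m u n)) :
  forall k n, (k < n)%nat -> (n < N)%nat -> fst (u k) <> fst (u n).
Proof.
  intros k n hkn hn E.
  destruct (hrun n hn) as [h1 [h2 hs]].
  pose proof (Bpos b m hb) as B.
  assert (Hpt : gridbox b m (fst (u n)) (snd (u n)) (INR (fst (u n)) / INR b ^ m) (INR (snd (u n)) / INR b ^ m)).
  { split; split; try lra; unfold Rdiv; apply Rmult_lt_compat_r;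
      try (apply Rinv_0_lt_compat; lra); lra. }
  apply (Uset_not _ _ _ _ _ _ (hs _ _ Hpt) k hkn).
  assert (hk : (k < N)%nat) by lia.
  destruct (hrun k hk) as [h1' [h2' _]].
  exists m, 0%nat, (fst (u k)), 0%nat; split; [apply col_in_Em; assumption|].
  rewrite E; exact (col_box b m _ _ _ _ hb h2 Hpt).
Qed.

Theorem mainTheorem2 (b m : nat) (hb : (2 <= b)%nat)
  (u : nat -> nat * nat) (N : nat)
  (hrun : forall n : nat, (n < N)%nat ->
     (fst (u n) < b ^ m)%nat /\ (snd (u n) < b ^ m)%nat /\
     rsubset (gridbox b m (fst (u n)) (snd (u n))) (Uset b m u n)) :
  (N <= b ^ m)%nat.
Proof.
  pose proof (distinct b m u N hb hrun) as D.
  assert (U : NoDup (map (fun n => fst (u n)) (seq 0 N))).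
  { apply NoDup_map_NoDup_ForallPairs; [|apply seq_NoDup].
    intros i j Hi Hj Eq. apply in_seq in Hi; apply in_seq in Hj.
    destruct (Nat.lt_trichotomy i j) as [h|[h|h]]; [|exact h|].
    - exfalso; exact (D i j h ltac:(lia) Eq).
    - exfalso; exact (D j i h ltac:(lia) (eq_sym Eq)). }
  assert (S : incl (map (fun n => fst (u n)) (seq 0 N)) (seq 0 (b ^ m))).
  { intros z Hz. apply in_map_iff in Hz; destruct Hz as [i [<- Hi]].
    apply in_seq in Hi. apply in_seq. destruct (hrun i ltac:(lia)); lia. }
  pose proof (NoDup_incl_length U S) as L.
  rewrite length_map, !length_seq in L; exact L.
Qed.
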